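(* Let $\Gamma_\mu:\mathbb{R}^N_+\to\mathbb{R}^N_+$ be the operator induced by $\Gamma\in(\mathcal{K}_\infty\cup\{0\})^{N\times N}$ and monotone aggregation functions $\mu_1,\dots,\mu_N$, satisfying the small gain condition $\Gamma_\mu(s)\not\ge s$ for all $s\in\mathbb{R}^N_+\setminus\{0\}$, and assume $\Gamma$ has no zero row, i.e. $\Gamma_\mu(e)_i\neq0$ for all $i$. Let $\kappa_0>0$, $\kappa_\Gamma>\kappa_h>0$, let $\phi$ be as in the context and let $c\in\mathbb{R}^N$ with $c\gg0$ and $\|c\|<\kappa_\Gamma/2$. Then there exists $\delta>0$ such that: for every $(N+1)$-simplex $\langle y^1,\dots,y^{N+2}\rangle$ of $\tilde K_1(\delta)$ (so $y^{N+2}=y^1+(\delta,\dots,\delta,1)^\top$), writing $y^j=(v^j,t_j)$, if $v^j\in\mathbb{R}^N_+$ and $\kappa_\Gamma/2\le\|v^j\|<\kappa_\Gamma+\kappa_0$ for $j=1,\dots,N+1$ and $\kappa_\Gamma+\kappa_0\le\|v^{N+2}\|\le\kappa_\Gamma+\kappa_0+\delta$, then the facet $\tau=\langle y^1,\dots,y^{N+1}\rangle$ is not complete. Moreover $\delta$ can be chosen so that in addition $\delta\sqrt N<(\kappa_\Gamma-\kappa_h)/2$, whence every point of $\mathbb{R}^N_+$ at distance less than $\delta\sqrt N$ from a fixed point of $\phi$ has norm less than $\kappa_\Gamma/2$.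
   Context: Order on $\mathbb{R}^N$: $v\ge w$ iff $v_i\ge w_i$ for all $i$; $v>w$ iff $v\ge w$, $v\ne w$; $v\gg w$ iff $v_i>w_i$ for all $i$. $\|\cdot\|$ Euclidean norm, $e=(1,\dots,1)^\top$. $\mathcal{K}_\infty$: continuous, strictly increasing, unbounded $\gamma:\mathbb{R}_+\to\mathbb{R}_+$ with $\gamma(0)=0$; $0$ denotes the zero function. A monotone aggregation function is a continuous $\mu_i:\mathbb{R}^N_+\to\mathbb{R}_+$ with $\mu_i(s)=0$ iff $s=0$, $\mu_i(s)<\mu_i(t)$ whenever $s\ll t$, and $\mu_i(s)\to\infty$ as $\|s\|\to\infty$. The induced operator is $\Gamma_\mu(s)_i=\mu_i(\gamma_{i1}(s_1),\dots,\gamma_{iN}(s_N))$. Given $\kappa_0>0$, $\kappa_\Gamma>\kappa_h>0$, $\phi(v)=\Gamma_\mu(v)\big(1+\min\{0,\frac{\kappa_\Gamma-2\|v\|}{\|v\|+\kappa_0}\}\big)+\max\{0,\kappa_h-2\|v\|\}e$ for $v\in\mathbb{R}^N_+$. Triangulation $\tilde K_1(\delta)$: with $P=\mathrm{diag}(\delta,\dots,\delta,1)$, its $(N+1)$-simplices are $\langle y^1,\dots,y^{N+2}\rangle$ with $y^1=(\delta z,0)$, $z\in\mathbb{Z}^N$, $y^{i+1}=y^i+Pe_{\pi(i)}$ for a permutation $\pi$ of $\{1,\dots,N+1\}$; all vertices lie in $\mathbb{R}^N\times\{0,1\}$ and are componentwise increasing. Its $N$-simplices are the facets of these. Homotopy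 $\vartheta(v,t)=(1-t)c+t\phi(v)$; labeling $l(v,t)=\vartheta(v,t)-v$. Labeling matrix $L(\tau)$ of $\tau=\langle y^1,\dots,y^{N+1}\rangle$: $(N+1)\times(N+1)$ with $j$-th column $(1,l(y^j)^\top)^\top$. $W\succ0$ (lexicographically positive) means the first nonzero entry of each row of $W$ is positive. $\tau$ is complete if $L(\tau)W=I_{N+1}$ has a solution $W\succ0$. *)

(* Defs.v *)
From Stdlib Require Import Reals.
From mathcomp Require Import all_boot all_fingroup.
Set Implicit Arguments.
Unset Strict Implicit.
Unset Printing Implicit Defensive.

Local Open Scope R_scope.

Definition vec (N : nat) := 'I_N -> R.

Definition sumR (n : nat) (f : 'I_n -> R) : R := \big[Rplus/0]_(i < n) f i.

Definition vnorm (N : nat) (v : vec N) : R := sqrt (sumR (fun i => v i * v i)).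

Definition vsub (N : nat) (v w : vec N) : vec N := fun i => v i - w i.

Definition vzero (N : nat) : vec N := fun _ => 0.
Definition vones (N : nat) : vec N := fun _ => 1.

Definition vnonneg (N : nat) (v : vec N) : Prop := forall i, 0 <= v i.
Definition vge (N : nat) (v w : vec N) : Prop := forall i, w i <= v i.
Definition vgg (N : nat) (v w : vec N) : Prop := forall i, w i < v i.

(* class K_infinity, functions on R_+ (values on negatives irrelevant) *)
Definition K_inf (g : R -> R) : Prop :=
  (forall x, 0 <= x -> 0 <= g x) /\
  (forall x, 0 <= x -> forall eps, 0 < eps -> exists d, 0 < d /\
       forall y, 0 <= y -> Rabs (y - x) < d -> Rabs (g y - g x) < eps) /\
  (forall x y, 0 <= x -> x < y -> g x < g y) /\
  (forall M, exists x, 0 <= x /\ M < g x) /\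
  g 0 = 0.

Definition zero_fun (g : R -> R) : Prop := forall x, 0 <= x -> g x = 0.

Definition MAF (N : nat) (mu : vec N -> R) : Prop :=
  (forall s, vnonneg s -> forall eps, 0 < eps -> exists d, 0 < d /\
      forall t, vnonneg t -> vnorm (vsub t s) < d -> Rabs (mu t - mu s) < eps) /\
  (forall s, vnonneg s -> 0 <= mu s) /\
  (forall s, vnonneg s -> (mu s = 0 <-> s = @vzero N)) /\
  (forall s t, vnonneg s -> vnonneg t -> vgg t s -> mu s < mu t) /\
  (forall M, exists K, forall s, vnonneg s -> K < vnorm s -> M < mu s).

Definition Gamma_mu (N : nat) (gam : 'I_N -> 'I_N -> R -> R)
  (mu : 'I_N -> vec N -> R) (s : vec N) : vec N :=
  fun i => mu i (fun j => gam i j (s j)).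

Definition phi (N : nat) (gam : 'I_N -> 'I_N -> R -> R)
  (mu : 'I_N -> vec N -> R) (k0 kG kh : R) (v : vec N) : vec N :=
  fun i => Gamma_mu gam mu v i *
             (1 + Rmin 0 ((kG - 2 * vnorm v) / (vnorm v + k0)))
           + Rmax 0 (kh - 2 * vnorm v).

Definition pt (N : nat) : Type := (vec N * R)%type.

Definition label (N : nat) (gam : 'I_N -> 'I_N -> R -> R)
  (mu : 'I_N -> vec N -> R) (k0 kG kh : R) (c : vec N) (y : pt N) : vec N :=
  fun i => (1 - snd y) * c i + snd y * phi gam mu k0 kG kh (fst y) i - fst y i.

(* Vertices of the (N+1)-simplex of K~_1(delta) given by z in Z^N and a
   permutation pi of the N+1 coordinates.  Vertex j (j = 0,...,N+1, i.e.
   y^{j+1} of the paper) is y^1 + sum_{i<j} P e_{pi(i)}; coordinate N is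
   the homotopy coordinate t. *)
Definition moved (N : nat) (pi : {perm 'I_N.+1}) (j : nat) (k : 'I_N.+1) : bool :=
  [exists i : 'I_N.+1, ((nat_of_ord i < j)%N && (pi i == k))].

Definition vertex (N : nat) (delta : R) (z : 'I_N -> Z) (pi : {perm 'I_N.+1})
  (j : nat) : pt N :=
  ((fun k : 'I_N => delta * IZR (z k)
       + (if moved pi j (widen_ord (leqnSn N) k) then delta else 0)),
   (if moved pi j ord_max then 1 else 0)).

Definition lexpos (n : nat) (W : 'I_n -> 'I_n -> R) : Prop :=
  forall r, exists k : 'I_n,
    (forall k' : 'I_n, (nat_of_ord k' < nat_of_ord k)%N -> W r k' = 0) /\ 0 < W r k.

(* labeling matrix of an N-simplex with vertices ys 0, ..., ys N:
   column j is (1, l(ys j)) *)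
Definition labmat (N : nat) (l : pt N -> vec N) (ys : 'I_N.+1 -> pt N)
  : 'I_N.+1 -> 'I_N.+1 -> R :=
  fun r j => match unlift ord0 r with
             | None => 1
             | Some i => l (ys j) i
             end.

Definition complete (N : nat) (l : pt N -> vec N) (ys : 'I_N.+1 -> pt N) : Prop :=
  exists W : 'I_N.+1 -> 'I_N.+1 -> R,
    (forall r c, sumR (fun k => labmat l ys r k * W k c) = if r == c then 1 else 0)
    /\ lexpos W.

(* Main.v *)
Require Import Defs.
From Stdlib Require Import Reals Lra.
From HB Require Import structures.
From mathcomp Require Import all_boot all_fingroup.
Local Open Scope R_scope.
Set Implicit Arguments.

Lemma RplusA' : associative Rplus. Proof. move=> x y z; ring. Qed.
Lemma RplusC' : commutative Rplus. Proof. move=> x y; ring. Qed.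
Lemma Rplus0' : left_id 0 Rplus. Proof. move=> x; ring. Qed.
HB.instance Definition _ := Monoid.isComLaw.Build R 0 Rplus RplusA' RplusC' Rplus0'.

Lemma sumR_ext n (f g : 'I_n -> R) : (forall i, f i = g i) -> sumR f = sumR g.
Proof. move=> H; apply: eq_bigr => i _; exact: H. Qed.

Lemma sumR_le n (f g : 'I_n -> R) : (forall i, f i <= g i) -> sumR f <= sumR g.
Proof. move=> H; apply: (big_ind2 (fun a b => a <= b)); [lra| move=> *; lra|move=> i _; exact: H]. Qed.

Lemma sumR_nonneg n (f : 'I_n -> R) : (forall i, 0 <= f i) -> 0 <= sumR f.
Proof. move=> H; apply: (big_ind (fun a => 0 <= a)); [lra| move=> *; lra|move=> i _; exact: H]. Qed.

Lemma sumR_scal n (f : 'I_n -> R) k : sumR (fun i => k * f i) = k * sumR f.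
Proof. apply: (big_ind2 (fun a b => a = k * b)); [ring| move=> ? ? ? ? -> ->; ring|by []]. Qed.

Lemma sumR_plus n (f g : 'I_n -> R) : sumR (fun i => f i + g i) = sumR f + sumR g.
Proof. exact: big_split. Qed.

Lemma sumR_const n k : sumR (fun _ : 'I_n => k) = INR n * k.
Proof. rewrite /sumR big_const_ord; elim: n => [|n IH]; first (simpl; ring).
rewrite iterS.
rewrite IH; destruct n; simpl; ring. Qed.

Lemma sumR_ge_term n (f : 'I_n -> R) j : (forall i, 0 <= f i) -> f j <= sumR f.
Proof. move=> H; rewrite /sumR (bigD1 j) //=.
have aux : forall x y, 0 <= y -> x <= x + y by move=> *; lra.
apply: aux.
apply: (big_ind (fun a => 0 <= a)); [lra| move=> *; lra|move=> i _; exact: H].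
Qed.

Lemma vnorm_ext N (a b : vec N) : (forall i, a i = b i) -> vnorm a = vnorm b.
Proof. move=> H; rewrite /vnorm; f_equal; apply: sumR_ext => i; rewrite H; ring. Qed.

Lemma vnorm_ge0 N (a : vec N) : 0 <= vnorm a.
Proof. exact: sqrt_pos. Qed.

Lemma vnorm_mono N (a b : vec N) : (forall i, 0 <= a i <= b i) -> vnorm a <= vnorm b.
Proof. move=> H; apply: sqrt_le_1_alt; apply: sumR_le => i; have := H i; nra. Qed.

Lemma vnorm_comp N (a : vec N) i : Rabs (a i) <= vnorm a.
Proof. rewrite /vnorm -sqrt_Rsqr_abs; apply: sqrt_le_1_alt; rewrite /Rsqr.
have := @sumR_ge_term N (fun k => a k * a k) i. apply. move=> k; nra. Qed.

Lemma vnorm_const N d : 0 <= d -> vnorm (fun _ : 'I_N => d) = d * sqrt (INR N).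
Proof. move=> Hd; rewrite /vnorm sumR_const sqrt_mult ?sqrt_square.
all: try nra. all: try ring. all: try exact: pos_INR. Qed.

Lemma vnorm_scal N (a : vec N) k : 0 <= k -> vnorm (fun i => k * a i) = k * vnorm a.
Proof. move=> Hk; rewrite /vnorm.
rewrite (sumR_ext (fun i => k * a i * (k * a i)) (fun i => (k * k) * (a i * a i))); last by move=> i; ring.
rewrite sumR_scal sqrt_mult ?sqrt_square //; try nra.
apply: sumR_nonneg => i /=; exact: Rle_0_sqr. Qed.

Lemma cauchy_schwarz N (a b : vec N) :
  sumR (fun i => a i * b i) ^ 2 <= sumR (fun i => a i * a i) * sumR (fun i => b i * b i).
Proof.
set A := sumR (fun i => a i * a i). set B := sumR (fun i => a i * b i).
set C := sumR (fun i => b i * b i).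
have Q : forall l, 0 <= A + 2 * l * B + l * l * C.
  move=> l.
  have -> : A + 2 * l * B + l * l * C = sumR (fun i => (a i + l * b i) * (a i + l * b i)).
    rewrite /A /B /C -!sumR_scal -!sumR_plus; apply: sumR_ext => i; ring.
  apply: sumR_nonneg => i /=; exact: Rle_0_sqr.
have HC : 0 <= C by apply: sumR_nonneg => i /=; exact: Rle_0_sqr.
have HA : 0 <= A by apply: sumR_nonneg => i /=; exact: Rle_0_sqr.
destruct (Req_dec C 0) as [C0|C0].
- destruct (Req_dec B 0) as [B0|B0].
  + rewrite B0 C0; nra.
  + have := Q (- (A + 1) / (2 * B)). rewrite C0.
    have -> : A + 2 * (- (A + 1) / (2 * B)) * B + - (A + 1) / (2 * B) * (- (A + 1) / (2 * B)) * 0 = -1.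
      field; auto.
    lra.
- have := Q (- B / C).
  have -> : A + 2 * (- B / C) * B + - B / C * (- B / C) * C = (A * C - B * B) / C by field.
  move=> H.
  have HCp : 0 < C by lra.
  have : 0 <= A * C - B * B.
    have := Rmult_le_compat_r C _ _ (Rlt_le _ _ HCp) H.
    have -> : (A * C - B * B) / C * C = A * C - B * B by field.
    lra.
  nra.
Qed.

Lemma vnorm_triangle N (a b : vec N) : vnorm (fun i => a i + b i) <= vnorm a + vnorm b.
Proof.
have CS := cauchy_schwarz a b.
rewrite /vnorm.
set A := sumR (fun i => a i * a i). set B := sumR (fun i => a i * b i).
set C := sumR (fun i => b i * b i).
have HC : 0 <= C by apply: sumR_nonneg => i /=; exact: Rle_0_sqr.
have HA : 0 <= A by apply: sumR_nonneg => i /=; exact: Rle_0_sqr.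
have -> : sumR (fun i => (a i + b i) * (a i + b i)) = A + 2 * B + C.
  rewrite /A /B /C -!sumR_scal -!sumR_plus; apply: sumR_ext => i; ring.
have sA := sqrt_sqrt A HA. have sC := sqrt_sqrt C HC.
have pA := sqrt_pos A. have pC := sqrt_pos C.
have HB : B <= sqrt A * sqrt C.
  have : B * B <= (sqrt A * sqrt C) * (sqrt A * sqrt C).
    have -> : sqrt A * sqrt C * (sqrt A * sqrt C) = (sqrt A * sqrt A) * (sqrt C * sqrt C) by ring.
    have E : B*B = B^2 by ring.
    rewrite sA sC E; exact: CS.
  have s0 : 0 <= sqrt A * sqrt C by apply: Rmult_le_pos.
  move: s0; set s := sqrt A * sqrt C => s0 h.
  apply: Rnot_lt_le => hlt.
  have : s * s < B * B by apply: Rmult_le_0_lt_compat.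
  lra.
rewrite -(sqrt_square (sqrt A + sqrt C)); last lra.
apply: sqrt_le_1_alt; nra.
Qed.

Set Implicit Arguments.

Lemma dnp a b : a <= 0 -> 0 < b -> a / b <= 0.
Proof. move=> ha hb; have := Rinv_0_lt_compat b hb; rewrite /Rdiv; nra. Qed.
Lemma dnn a b : 0 <= a -> 0 < b -> 0 <= a / b.
Proof. move=> ha hb; have := Rinv_0_lt_compat b hb; rewrite /Rdiv; nra. Qed.
Lemma dle a b c : 0 < b -> a <= c * b -> a / b <= c.
Proof. move=> hb h; apply: (Rmult_le_reg_r b) => //.
have -> : a / b * b = a by field; lra. lra. Qed.

Lemma dge a b c : 0 < b -> a * b <= c -> a <= c / b.
Proof. move=> hb h; apply: (Rmult_le_reg_r b) => //.
have -> : c / b * b = c by field; lra. lra. Qed.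

Section S.
Variables (N : nat) (gam : 'I_N -> 'I_N -> R -> R) (mu : 'I_N -> vec N -> R)
  (Hgam : forall i j, K_inf (gam i j) \/ zero_fun (gam i j))
  (Hmu : forall i, MAF (mu i)).

Lemma gam_nonneg i j x : 0 <= x -> 0 <= gam i j x.
Proof. move=> Hx; case: (Hgam i j) => [[H _]|H]; first exact: H.
rewrite H //; lra. Qed.

Lemma gam_mono i j x y : 0 <= x -> x <= y -> gam i j x <= gam i j y.
Proof. move=> Hx Hxy; case: (Hgam i j) => [[_ [_ [H _]]]|H].
- case: (Rle_lt_or_eq_dec _ _ Hxy) => h; first by apply: Rlt_le; apply: H.
  rewrite h; lra.
- rewrite !H; lra. Qed.

Lemma Gamma_nonneg v i : vnonneg v -> 0 <= Gamma_mu gam mu v i.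
Proof. move=> Hv; rewrite /Gamma_mu; case: (Hmu i) => [_ [H _]]; apply: H.
move=> j; exact: gam_nonneg. Qed.

Lemma Gamma_bound v i R0 : vnonneg v -> vnorm v <= R0 ->
  Gamma_mu gam mu v i <= mu i (fun j => gam i j R0 + 1).
Proof. move=> Hv HR; rewrite /Gamma_mu; case: (Hmu i) => [_ [_ [_ [H _]]]].
have R0p : 0 <= R0 by have := vnorm_ge0 v; lra.
apply: Rlt_le; apply: H.
- move=> j; exact: gam_nonneg.
- move=> j; have := gam_nonneg i j R0p; lra.
- move=> j; have : v j <= R0.
    have := vnorm_comp v j; have := Rle_abs (v j); lra.
  move=> h; have := gam_mono i j (Hv j) h; lra.
Qed.

Lemma vnorm_zero (v : vec N) : (forall i, v i = 0) -> vnorm v = 0.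
Proof. move=> H; rewrite (@vnorm_ext N v (fun _ => 0)) // vnorm_const; lra. Qed.

Lemma fixed_small k0 kG kh (Hkh : 0 < kh)
  (Hsg : forall s : vec N, vnonneg s -> s <> @vzero N -> ~ vge (Gamma_mu gam mu s) s)
  v : vnonneg v -> phi gam mu k0 kG kh v = v -> vnorm v < kh / 2.
Proof.
move=> Hv Hfp; apply: Rnot_le_lt => Hn.
set f := 1 + Rmin 0 ((kG - 2 * vnorm v) / (vnorm v + k0)).
have Hf1 : f <= 1 by have := Rmin_l 0 ((kG - 2 * vnorm v) / (vnorm v + k0)); rewrite /f; lra.
have Hvi : forall i, v i = Gamma_mu gam mu v i * f.
  move=> i; have := f_equal (fun g => g i) Hfp; rewrite /phi /= -/f.
  rewrite Rmax_left; last lra. lra.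
have Hnz : v <> @vzero N.
  move=> E; have : vnorm v = 0 by apply: vnorm_zero => i; rewrite E.
  lra.
case: (Rle_lt_dec f 0) => Hf.
- apply: Hnz; have : vnorm v = 0.
    apply: vnorm_zero => i; have := Hv i; rewrite Hvi.
    have := Gamma_nonneg i Hv; nra.
  lra.
- apply: (Hsg v Hv Hnz) => i; rewrite [X in X <= _]Hvi.
  have := Gamma_nonneg i Hv; nra.
Qed.

End S.

Lemma moved0 N (pi : {perm 'I_N.+1}) k : moved pi 0 k = false.
Proof. apply/existsP => [[i /andP [H _]]]; by rewrite ltn0 in H. Qed.

Lemma movedN N (pi : {perm 'I_N.+1}) k : moved pi N.+1 k = true.
Proof. apply/existsP; exists ((pi^-1)%g k); by rewrite ltn_ord permKV eqxx. Qed.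

Unset Implicit Arguments.

Theorem mainTheorem5 (N : nat) (HN : (1 <= N)%N)
  (gam : 'I_N -> 'I_N -> R -> R) (mu : 'I_N -> vec N -> R)
  (Hgam : forall i j, K_inf (gam i j) \/ zero_fun (gam i j))
  (Hmu : forall i, MAF (mu i))
  (Hsg : forall s : vec N, vnonneg s -> s <> @vzero N ->
           ~ vge (Gamma_mu gam mu s) s)
  (Hrow : forall i, Gamma_mu gam mu (@vones N) i <> 0)
  (k0 kG kh : R) (Hk0 : 0 < k0) (Hkh : 0 < kh) (HkG : kh < kG)
  (c : vec N) (Hc : vgg c (@vzero N)) (Hcn : vnorm c < kG / 2) :
  exists delta : R, 0 < delta /\
    (forall (z : 'I_N -> Z) (pi : {perm 'I_N.+1}),
       (forall j : 'I_N.+1,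
          vnonneg (fst (vertex delta z pi j)) /\
          kG / 2 <= vnorm (fst (vertex delta z pi j)) /\
          vnorm (fst (vertex delta z pi j)) < kG + k0) ->
       kG + k0 <= vnorm (fst (vertex delta z pi N.+1)) ->
       vnorm (fst (vertex delta z pi N.+1)) <= kG + k0 + delta ->
       ~ complete (label gam mu k0 kG kh c)
                  (fun j : 'I_N.+1 => vertex delta z pi j)) /\
    delta * sqrt (INR N) < (kG - kh) / 2 /\
    (forall v w : vec N, vnonneg v -> phi gam mu k0 kG kh v = v ->
       vnonneg w -> vnorm (vsub w v) < delta * sqrt (INR N) ->
       vnorm w < kG / 2).
Proof.
set R0 := kG + k0.
set T : vec N := fun i => mu i (fun j => gam i j R0 + 1).
set g := kG / 2 - vnorm c.
have Hg : 0 < g by rewrite /g; lra.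
have HT : 0 <= vnorm T := vnorm_ge0 T.
set m := Rmin ((kG - kh) / 4) (g * k0 / (2 * (vnorm T + 1))).
have Hm1 : m <= (kG - kh) / 4 by apply: Rmin_l.
have Hm2 : m <= g * k0 / (2 * (vnorm T + 1)) by apply: Rmin_r.
have Hm : 0 < m.
  apply: Rmin_glb_lt; first lra.
  apply: Rdiv_lt_0_compat; nra.
have HsN : 0 < sqrt (INR N) by apply: sqrt_lt_R0; apply: lt_0_INR; apply/ltP.
exists (m / sqrt (INR N)).
have Edm : m / sqrt (INR N) * sqrt (INR N) = m by field; lra.
rewrite Edm.
split; first by apply: Rdiv_lt_0_compat.
split; last first.
  split; first lra.
  move=> v w Hv Hfp Hw Hd.
  have Hv2 := fixed_small Hgam Hmu Hkh Hsg Hv Hfp.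
  have := vnorm_triangle v (vsub w v).
  rewrite (@vnorm_ext N (fun i => v i + vsub w v i) w); last by move=> i; rewrite /vsub; ring.
  lra.
set delta := m / sqrt (INR N).
have Hdel : 0 < delta by apply: Rdiv_lt_0_compat.
move=> z pi Hfac HNn _ [W [HW Hlex]].
set V := fun j => fst (vertex delta z pi j).
set t := fun j => snd (vertex delta z pi j).
have V0 : forall (j : 'I_N.+1) i, V 0%N i <= V j i.
  move=> j i; rewrite /V /vertex /= moved0; case: ifP => _; lra.
have VN : forall (j : 'I_N.+1) i, V N.+1 i <= V j i + delta.
  move=> j i; rewrite /V /vertex /= movedN; case: ifP => _; lra.
have Ht : forall j, 0 <= t j <= 1.
  move=> j; rewrite /t /vertex /=; case: ifP => _; lra.
have [Hv0 [Hv0n _]] := Hfac ord0.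
have Hv0' : vnonneg (V 0%N) := Hv0.
have Hnk : forall j : 'I_N.+1, R0 - m <= vnorm (V j).
  move=> j.
  have := vnorm_triangle (V j) (fun _ => delta).
  rewrite vnorm_const; last lra. rewrite Edm => h.
  have : vnorm (V N.+1) <= vnorm (fun i => V j i + delta).
    apply: vnorm_mono => i; split; last exact: VN.
    rewrite /V /vertex /= movedN; have := Hv0' i; rewrite /V /vertex /= moved0; lra.
  have HNn' : kG + k0 <= vnorm (V N.+1) := HNn.
  move=> h2; simpl in h; rewrite /R0; lra.
set s := m / k0.
have Hphi : forall (j : 'I_N.+1) i, 0 <= phi gam mu k0 kG kh (V j) i <= s * T i.
  move=> j i.
  have [Hvj0 [Hvjn0 Hvjl0]] := Hfac j.
  have Hvj : vnonneg (V j) := Hvj0.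
  have Hvjn : kG / 2 <= vnorm (V j) := Hvjn0.
  have Hvjl : vnorm (V j) < kG + k0 := Hvjl0.
  have Hnj := Hnk j.
  rewrite /phi Rmax_left; last lra.
  rewrite Rmin_right; last first.
    apply: dnp; try lra; have := vnorm_ge0 (V j); lra.
  set n := vnorm (V j).
  have Hn0 : 0 <= n := vnorm_ge0 _.
  have Ef : 1 + (kG - 2 * n) / (n + k0) = (R0 - n) / (n + k0) by rewrite /R0; field; lra.
  rewrite Ef.
  have Hf0 : 0 <= (R0 - n) / (n + k0) by apply: dnn; rewrite /n /R0; lra.
  have Hf1 : (R0 - n) / (n + k0) <= s.
    rewrite /s; apply: dge; first lra.
    have E2 : (R0 - n) / (n + k0) * k0 = (R0 - n) * (k0 / (n + k0)) by field; lra.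
    rewrite E2.
    have : k0 / (n + k0) <= 1 by apply: dle; lra.
    have : 0 <= k0 / (n + k0) by apply: dnn; lra.
    have : R0 - n <= m by rewrite /n; lra.
    have : 0 <= R0 - n by rewrite /n /R0; lra.
    nra.
  have HG0 : 0 <= Gamma_mu gam mu (V j) i by apply: Gamma_nonneg.
  have HGT : Gamma_mu gam mu (V j) i <= T i.
    apply: Gamma_bound => //; rewrite /R0; lra.
  rewrite Rplus_0_r; split; nra.
have Hw0 : forall k, 0 <= W k ord0.
  move=> k; have [k' [H1 H2]] := Hlex k. case: (posnP k') => hk.
  - have E : ord0 = k' by apply: val_inj; rewrite /= hk.
    rewrite E; lra.
  - rewrite H1 //; lra.
have Hsum : sumR (fun k => W k ord0) = 1.
  have := HW ord0 ord0; rewrite eqxx => <-; apply: sumR_ext => k; rewrite /labmat unlift_none; ring.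
have Hrowi : forall i, sumR (fun k => label gam mu k0 kG kh c (vertex delta z pi k) i * W k ord0) = 0.
  move=> i; have := HW (lift ord0 i) ord0.
  have -> : (lift ord0 i == ord0) = false.
    apply/eqP => E; move: (neq_lift ord0 i); by rewrite E eqxx.
  move=> <-; apply: sumR_ext => k; by rewrite /labmat liftK.
have Hci : forall i, 0 < c i by move=> i; have := Hc i; rewrite /vzero.
have Key : forall i, V 0%N i <= c i + s * T i.
  move=> i.
  have E1 : V 0%N i = sumR (fun k => V 0%N i * W k ord0) by rewrite sumR_scal Hsum; ring.
  have E2 : sumR (fun k : 'I_N.+1 => W k ord0 * V k i) =
     sumR (fun k => W k ord0 * ((1 - t k) * c i + t k * phi gam mu k0 kG kh (V k) i))
     + (-1) * sumR (fun k => label gam mu k0 kG kh c (vertex delta z pi k) i * W k ord0).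
    rewrite -sumR_scal -sumR_plus; apply: sumR_ext => k; rewrite /label /t /V; ring.
  rewrite Hrowi in E2.
  have L1 : sumR (fun k => V 0%N i * W k ord0) <= sumR (fun k : 'I_N.+1 => W k ord0 * V k i).
    apply: sumR_le => k; have := V0 k i; have := Hw0 k; nra.
  have L2 : sumR (fun k => W k ord0 * ((1 - t k) * c i + t k * phi gam mu k0 kG kh (V k) i))
      <= sumR (fun k => (c i + s * T i) * W k ord0).
    apply: sumR_le => k; have := Hw0 k; have := Ht k; have := Hphi k i; have := Hci i.
    move=> h1 h2 h3 h4.
    have : (1 - t k) * c i + t k * phi gam mu k0 kG kh (V k) i <= c i + s * T i by nra.
    nra.
  rewrite sumR_scal Hsum in L2. lra.
have Hv0n' : kG / 2 <= vnorm (V 0%N) := Hv0n.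
have M1 : vnorm (V 0%N) <= vnorm (fun i => c i + s * T i).
  apply: vnorm_mono => i; split; [exact: Hv0' | exact: Key].
have M2 := vnorm_triangle c (fun i => s * T i).
have Hs0 : 0 <= s by apply: dnn; lra.
rewrite vnorm_scal // in M2.
have Hm3 : m * (2 * (vnorm T + 1)) <= g * k0.
  have := Rmult_le_compat_r (2 * (vnorm T + 1)) _ _ ltac:(lra) Hm2.
  have -> : g * k0 / (2 * (vnorm T + 1)) * (2 * (vnorm T + 1)) = g * k0 by field; lra.
  done.
have HsT : s * vnorm T < g.
  have -> : s * vnorm T = (m * vnorm T) / k0 by rewrite /s; field; lra.
  apply: Rlt_le_trans (_ : (g * k0) / k0 <= g).
  - rewrite /Rdiv; apply: Rmult_lt_compat_r; first by apply: Rinv_0_lt_compat.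
    nra.
  - have -> : g * k0 / k0 = g by field; lra. lra.
simpl in M2. rewrite /g in HsT. lra.
Qed.
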